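(* Let $n\ge3$ and let $L^B$ be a blow-up of $L\cong\mathbf{2}^n$ with atoms $q_1,\dots,q_n$ such that $|[q_i]|\ge2$ for every $1\le i\le n$. Then $G(L^B)^{**}=G(L^B)_{SR}$ (same vertex set and same edges).
   Context: Blow-up: for $L\cong\mathbf{2}^n$ with atoms $q_1,\dots,q_n$, replace each $a\in L\setminus\{0,1\}$ by a finite chain $C_a$: $a=a^1\lessdot\cdots\lessdot a^{k_a}$ ($k_a\ge1$), keep $0,1$; elements of one chain are ordered along it, and for $u\in C_a,v\in C_b$ with $a\ne b$ ($C_0=\{0\},C_1=\{1\}$), $u\le v$ iff $a<b$ in $L$. $G(L^B)$ is the zero-divisor graph of $L^B$ (vertices: nonzero elements with a nonzero element meeting them in $0$; adjacency: meet $=0$). For $x\in L^B$, $x^\perp=\{z:x\wedge z=0\}$, $[x]=\{y:y^\perp=x^\perp\}$ (so $[q_i]=C_{q_i}$), classes ordered by $[a]\le[b]$ iff $b^\perp\subseteq a^\perp$, $[a]\wedge[b]=[a\wedge b]$. $G(L^B)^{**}$: vertex set $V(G(L^B))$, distinct $x,y$ adjacent iff $[x]=[y]$, or $[x]\wedge[y]\ne[0]$ with $[x],[y]$ incomparable. In a graph $G$, $u$ is maximally distant from $v$ if $d(v,w)\le d(u,v)$ for all neighbours $w$ of $u$; $u,v$ are mutually maximally distant if each is maximally distant from the other. The boundary $\partial(G)$ is the set of vertices $u$ for which some $v$ is mutually maximally distant with $u$. The strong resolving graph $G_{SR}$ has vertex set $\partial(G)$, distinct $u,v$ adjacent iff they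 are mutually maximally distant in $G$. *)

(* Defs.v *)
From mathcomp Require Import all_boot all_order.
Set Implicit Arguments. Unset Strict Implicit. Unset Printing Implicit Defensive.

Section Graph.
Variable T : finType.
Variable e : rel T. (* adjacency; assumed to only relate vertices *)

Fixpoint within (m : nat) (u v : T) : bool :=
  if m is m'.+1 then within m' u v || [exists w, within m' u w && e w v]
  else u == v.

(* graph distance: least m with a walk of length m (shortest paths have
   length < #|T|); unreachable pairs get #|T| (irrelevant for connected graphs) *)
Definition dist (u v : T) : nat := find (fun m => within m u v) (iota 0 #|T|).

Definition maxdist (u v : T) : bool :=
  [forall w, e u w ==> (dist v w <= dist u v)].

Definition mmd (u v : T) : bool := maxdist u v && maxdist v u.

Definition boundary (V : {set T}) : {set T} :=
  [set u in V | [exists v in V, mmd u v]].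

Definition sr_adj (V : {set T}) (u v : T) : bool :=
  [&& u \in boundary V, v \in boundary V, u != v & mmd u v].
End Graph.

(* L = {set 'I_n}; atoms are the singletons.  The chain C_a has length
   kk k a (= k a for a <> 0,1, and 1 for a = 0 or 1); its j-th element
   (j < kk k a) is encoded as the pair (a, j). *)

Definition kk n (k : {set 'I_n} -> nat) (a : {set 'I_n}) : nat :=
  if (a == set0) || (a == setT) then 1 else k a.

Definition kmax n (k : {set 'I_n} -> nat) : nat := \max_(a : {set 'I_n}) kk k a.

Definition carrier n (k : {set 'I_n} -> nat) : finType :=
  ({set 'I_n} * 'I_(kmax k).+1)%type.

Definition LB n (k : {set 'I_n} -> nat) : {set carrier k} :=
  [set x : carrier k | (x.2 : nat) < kk k x.1].

Definition leB n (k : {set 'I_n} -> nat) (x y : carrier k) : bool :=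
  ((x.1 == y.1) && ((x.2 : nat) <= y.2)) || (x.1 \proper y.1).

Definition botB n (k : {set 'I_n} -> nat) : carrier k := (set0, ord0).

Definition is_meet n (k : {set 'I_n} -> nat) (x y w : carrier k) : bool :=
  [&& w \in LB k, leB w x, leB w y &
      [forall z in LB k, (leB z x && leB z y) ==> leB z w]].

Definition perp n (k : {set 'I_n} -> nat) (x : carrier k) : {set carrier k} :=
  [set z in LB k | is_meet x z (botB k)].

Definition cls n (k : {set 'I_n} -> nat) (x : carrier k) : {set carrier k} :=
  [set y in LB k | perp y == perp x].

Definition cle n (k : {set 'I_n} -> nat) (x y : carrier k) : bool :=
  perp y \subset perp x.

Definition cmeet_nz n (k : {set 'I_n} -> nat) (x y : carrier k) : bool :=
  [exists w in LB k, is_meet x y w && (cls w != cls (botB k))].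

Definition ZV n (k : {set 'I_n} -> nat) : {set carrier k} :=
  [set x in LB k | (x != botB k) &&
     [exists z in LB k, (z != botB k) && is_meet x z (botB k)]].

Definition zadj n (k : {set 'I_n} -> nat) (x y : carrier k) : bool :=
  [&& x \in ZV k, y \in ZV k, x != y & is_meet x y (botB k)].

Definition ssadj n (k : {set 'I_n} -> nat) (x y : carrier k) : bool :=
  [&& x \in ZV k, y \in ZV k, x != y &
      (cls x == cls y) ||
      [&& cmeet_nz x y, ~~ cle x y & ~~ cle y x]].

Definition atomB n (k : {set 'I_n} -> nat) (i : 'I_n) : carrier k := ([set i], ord0).

(* Main.v *)
Require Import Defs.
From mathcomp Require Import all_boot all_order.
Set Implicit Arguments. Unset Strict Implicit. Unset Printing Implicit Defensive.

Definition HK n (k : {set 'I_n} -> nat) :=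
  forall a : {set 'I_n}, a != set0 -> a != setT -> 0 < k a.

Lemma kk_pos n (k : {set 'I_n} -> nat) (hk : HK k) a : 0 < kk k a.
Proof. rewrite /kk; case: ifP => // /norP [h1 h2]; exact: hk. Qed.

Lemma kk_le n (k : {set 'I_n} -> nat) a : kk k a <= kmax k.
Proof. rewrite /kmax. apply: (@leq_bigmax _ (kk k)). Qed.

Definition mk n (k : {set 'I_n} -> nat) (a : {set 'I_n}) : carrier k :=
  (a, ord0).

Lemma mk_LB n (k : {set 'I_n} -> nat) (hk : HK k) a : mk k a \in LB k.
Proof. rewrite inE /=; exact: kk_pos. Qed.

Lemma leB_sub n (k : {set 'I_n} -> nat) (x y : carrier k) :
  leB x y -> x.1 \subset y.1.
Proof. by rewrite /leB => /orP [/andP [/eqP -> _] | /proper_sub]. Qed.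

Lemma sub_leB n (k : {set 'I_n} -> nat) (x y : carrier k) :
  x.1 \subset y.1 -> (x.2 : nat) = 0 -> leB x y.
Proof.
rewrite /leB => s h; rewrite h leq0n andbT.
by case: eqVneq => //= ne; rewrite properEneq ne s.
Qed.

Lemma leB_refl n (k : {set 'I_n} -> nat) (x : carrier k) : leB x x.
Proof. by rewrite /leB eqxx leqnn. Qed.

Lemma LB_set0 n (k : {set 'I_n} -> nat) (x : carrier k) :
  x \in LB k -> x.1 = set0 -> x = botB k.
Proof.
move: x => [a j]; rewrite inE /= => hj ea; subst; rewrite /kk eqxx /= in hj.
rewrite /botB; congr pair; apply/val_inj => /=.
by move: hj; rewrite ltnS leqn0 => /eqP.
Qed.

Lemma botLB n (k : {set 'I_n} -> nat) : botB k \in LB k.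
Proof. by rewrite inE /= /kk eqxx. Qed.

Lemma meet0 n (k : {set 'I_n} -> nat) (hk : HK k) (x z : carrier k) :
  is_meet x z (botB k) = (x.1 :&: z.1 == set0).
Proof.
rewrite /is_meet.
have l1 : forall y : carrier k, leB (botB k) y.
  by move=> y; apply: sub_leB => //=; exact: sub0set.
rewrite botLB !l1 /=.
apply/forall_inP/idP.
- move=> H; apply/negPn/negP => /set0Pn [i]; rewrite inE => /andP [ix iz].
  have := H (mk k [set i]) (mk_LB hk _).
  rewrite (@sub_leB _ _ _ x) ?sub1set //= (@sub_leB _ _ _ z) ?sub1set //=.
  by move=> /leB_sub; rewrite sub1set inE.
- move=> /eqP H w hw; apply/implyP => /andP [/leB_sub h1 /leB_sub h2].
  have e0 : w.1 = set0 by apply/eqP; rewrite -subset0 -H subsetI h1 h2.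
  by rewrite (LB_set0 hw e0) leB_refl.
Qed.

Lemma perpE n (k : {set 'I_n} -> nat) (hk : HK k) (x : carrier k) :
  perp x = [set z in LB k | x.1 :&: z.1 == set0].
Proof. by apply/setP => z; rewrite !inE meet0. Qed.

Lemma cleE n (k : {set 'I_n} -> nat) (hk : HK k) (x y : carrier k) :
  cle x y = (x.1 \subset y.1).
Proof.
rewrite /cle; apply/subsetP/subsetP => H.
- move=> i ix; apply/negPn/negP => iy.
  have : mk k (~: y.1) \in perp y by rewrite perpE // inE mk_LB //= setICr eqxx.
  move/H; rewrite perpE // inE /= => /andP [_ /eqP/setP/(_ i)].
  by rewrite !inE ix (negbTE iy).
- move=> z; rewrite !perpE // !inE => /andP [zl /eqP h]; rewrite zl /=.
  by rewrite -subset0 -h; apply: setSI; apply/subsetP.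
Qed.

Lemma perp_eq n (k : {set 'I_n} -> nat) (hk : HK k) (x y : carrier k) :
  (perp x == perp y) = (x.1 == y.1).
Proof.
rewrite eqEsubset.
change (cle y x && cle x y = (x.1 == y.1)).
by rewrite !cleE // eqEsubset andbC.
Qed.

Lemma clsE n (k : {set 'I_n} -> nat) (hk : HK k) (x : carrier k) :
  cls x = [set y in LB k | y.1 == x.1].
Proof. by apply/setP => y; rewrite !inE perp_eq. Qed.

Lemma cls_eq n (k : {set 'I_n} -> nat) (hk : HK k) (x y : carrier k) :
  x \in LB k -> (cls x == cls y) = (x.1 == y.1).
Proof.
move=> xl; apply/eqP/eqP => [H | H]; last by rewrite !clsE // H.
have : x \in cls x by rewrite clsE // inE xl eqxx.
by rewrite H clsE // inE => /andP [_ /eqP].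
Qed.

Lemma inZV n (k : {set 'I_n} -> nat) (hk : HK k) (x : carrier k) :
  (x \in ZV k) = [&& x \in LB k, x.1 != set0 & x.1 != setT].
Proof.
rewrite inE; case xl: (x \in LB k) => //=.
apply/andP/andP => [[hb /exists_inP [z zl /andP [zb hm]]] | [h0 hT]].
- split.
    by apply: contra hb => /eqP h; apply/eqP; exact: LB_set0.
  apply: contra zb => /eqP h; rewrite meet0 // h setTI in hm.
  by apply/eqP; exact: LB_set0 zl (eqP hm).
- split; first by apply: contra h0 => /eqP ->.
  apply/exists_inP; exists (mk k (~: x.1)); first exact: mk_LB.
  rewrite meet0 // setICr eqxx andbT.
  apply/eqP => /(congr1 fst) /= h.
  by move: hT; rewrite -[x.1]setCK h setC0 eqxx.
Qed.

Lemma zadjE n (k : {set 'I_n} -> nat) (hk : HK k) (x y : carrier k) :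
  zadj x y = [&& x \in ZV k, y \in ZV k & x.1 :&: y.1 == set0].
Proof.
rewrite /zadj meet0 //.
case xZ: (x \in ZV k) => //=; case: (y \in ZV k) => //=.
have [e | ne] := eqVneq x y => //=.
subst; rewrite setIid; move: xZ; rewrite inZV // => /and3P [_ /negbTE -> _].
by [].
Qed.

Lemma nleB_sub n (k : {set 'I_n} -> nat) (x y : carrier k) :
  ~~ leB x y -> ~~ leB y x -> ~~ (x.1 \subset y.1).
Proof.
move=> h1 h2; apply/negP => s; move: h1 h2.
rewrite /leB properEneq s andbT.
case: (x.1 =P y.1) => [e|ne] //=.
by rewrite e eqxx /= properxx orbF; case: (leqP (x.2 : nat) (y.2 : nat)) => // /ltnW ->.
Qed.

Lemma meet_ex n (k : {set 'I_n} -> nat) (hk : HK k) (x y : carrier k) :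
  x \in LB k -> y \in LB k -> exists2 w, is_meet x y w & x.1 :&: y.1 \subset w.1.
Proof.
move=> xl yl.
case lxy: (leB x y).
  exists x; last exact: subsetIl.
  rewrite /is_meet xl lxy leB_refl /=.
  by apply/forall_inP => z _; apply/implyP => /andP [].
case lyx: (leB y x).
  exists y; last exact: subsetIr.
  rewrite /is_meet yl lyx leB_refl /=.
  by apply/forall_inP => z _; apply/implyP => /andP [].
have sxy := nleB_sub (negbT lxy) (negbT lyx).
have syx := nleB_sub (negbT lyx) (negbT lxy).
set c := x.1 :&: y.1.
have hc : (kk k c).-1 < (kmax k).+1 by rewrite ltnS (leq_trans (leq_pred _) (kk_le _ _)).
exists (c, Ordinal hc); last exact: subxx.
have px : c \proper x.1.
  rewrite properEneq subsetIl andbT; apply: contra sxy => /eqP <-; exact: subsetIr.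
have py : c \proper y.1.
  rewrite properEneq subsetIr andbT; apply: contra syx => /eqP <-; exact: subsetIl.
rewrite /is_meet inE /= ltn_predL kk_pos //= /leB /= px py !orbT /=.
apply/forall_inP => z zl; apply/implyP => /andP [/leB_sub h1 /leB_sub h2].
have sz : z.1 \subset c by rewrite subsetI h1 h2.
case: (z.1 =P c) => [e|ne] /=.
  by move: zl; rewrite inE e => zl; rewrite -ltnS prednK ?kk_pos // zl.
by rewrite properEneq sz andbT; apply/eqP.
Qed.

Lemma cmeet_nzE n (k : {set 'I_n} -> nat) (hk : HK k) (x y : carrier k) :
  x \in LB k -> y \in LB k -> cmeet_nz x y = (x.1 :&: y.1 != set0).
Proof.
move=> xl yl; rewrite /cmeet_nz.
apply/exists_inP/idP.
- move=> [w wl /andP [hm hc]]; rewrite (cls_eq hk _ wl) /= in hc.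
  move: hm => /and4P [_ /leB_sub h1 /leB_sub h2 _].
  by apply: contra hc => /eqP h; rewrite -subset0 -h subsetI h1 h2.
- move=> hne; have [w hm hs] := meet_ex hk xl yl.
  have wl : w \in LB k by case/and4P: hm.
  exists w => //; rewrite hm /= (cls_eq hk _ wl) /=.
  by apply: contra hne => /eqP h; rewrite -subset0 -h.
Qed.

Lemma withinS (T : finType) (e : rel T) m (u v : T) :
  within e m.+1 u v = within e m u v || [exists w, within e m u w && e w v].
Proof. by []. Qed.

Lemma mkZV n (k : {set 'I_n} -> nat) (hk : HK k) a :
  a != set0 -> a != setT -> mk k a \in ZV k.
Proof. by move=> h0 hT; rewrite inZV // mk_LB //= h0 hT. Qed.

Lemma setC_neq0 n (a : {set 'I_n}) : a != setT -> ~: a != set0.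
Proof. by apply: contra => /eqP h; rewrite -[a]setCK h setC0. Qed.

Lemma setC_neqT n (a : {set 'I_n}) : a != set0 -> ~: a != setT.
Proof. by apply: contra => /eqP h; rewrite -[a]setCK h setCT. Qed.

Lemma within1E n (k : {set 'I_n} -> nat) (x y : carrier k) :
  within (@zadj n k) 1 x y = (x == y) || zadj x y.
Proof.
rewrite withinS; congr orb.
apply/existsP/idP => [[w /andP [/eqP -> h]] // | h].
by exists x; rewrite /= eqxx h.
Qed.

Lemma within2E n (k : {set 'I_n} -> nat) (hk : HK k) (x y : carrier k) :
  x \in ZV k -> y \in ZV k ->
  within (@zadj n k) 2 x y = [|| x == y, zadj x y | x.1 :|: y.1 != setT].
Proof.
move=> xZ yZ; rewrite withinS within1E -orbA; congr orb.
move: (xZ) (yZ); rewrite !inZV // => /and3P [xl x0 xT] /and3P [yl y0 yT].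
apply/idP/idP.
- case/orP => [-> // | /existsP [w /andP [h1 h2]]].
  move: h1; rewrite within1E => /orP [/eqP xw | ]; first by rewrite xw h2.
  move=> h1; apply/orP; right; move: h1.
  rewrite !zadjE // => /and3P [_ wZ /eqP hxw]; move: h2; rewrite zadjE // => /and3P [_ _ /eqP hwy].
  move: wZ; rewrite inZV // => /and3P [_ /set0Pn [i iw] _].
  apply/eqP => /setP /(_ i); rewrite !inE.
  move/setP: hxw => /(_ i); move/setP: hwy => /(_ i); rewrite !inE iw andbT /=.
  by move=> -> ->.
- case/orP => [-> // | h]; apply/orP; right.
  have hw : mk k (~: (x.1 :|: y.1)) \in ZV k.
    apply: mkZV => //; first exact: setC_neq0.
    apply: setC_neqT; apply: contra x0 => /eqP h0.
    by rewrite -subset0 -h0 subsetUl.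
  apply/existsP; exists (mk k (~: (x.1 :|: y.1))).
  rewrite within1E !zadjE // xZ yZ hw /=; apply/andP; split.
    by rewrite setCU setIA setICr set0I eqxx orbT.
  by rewrite setCU -setIA [~: y.1 :&: _]setIC setICr setI0.
Qed.

Lemma within3 n (k : {set 'I_n} -> nat) (hk : HK k) (x y : carrier k) :
  x \in ZV k -> y \in ZV k -> within (@zadj n k) 3 x y.
Proof.
move=> xZ yZ; rewrite withinS.
move: (xZ) (yZ); rewrite !inZV // => /and3P [xl x0 xT] /and3P [yl y0 yT].
rewrite within2E //.
case hu: (x.1 :|: y.1 != setT); first by rewrite !orbT.
move/negbFE/eqP: hu => hu.
have wZ : mk k (~: y.1) \in ZV k by apply: (mkZV hk); [exact: setC_neq0 | exact: setC_neqT].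
have vZ : mk k (~: x.1) \in ZV k by apply: (mkZV hk); [exact: setC_neq0 | exact: setC_neqT].
apply/orP; right; apply/existsP; exists (mk k (~: y.1)).
have h1 : zadj (mk k (~: y.1)) y.
  by rewrite zadjE // wZ yZ /= setIC setICr eqxx.
have h2 : zadj x (mk k (~: x.1)).
  by rewrite zadjE // xZ vZ /= setICr eqxx.
have h3 : zadj (mk k (~: x.1)) (mk k (~: y.1)).
  by rewrite zadjE // vZ wZ /= -setCU hu setCT eqxx.
rewrite h1 andbT withinS; apply/orP; right; apply/existsP; exists (mk k (~: x.1)).
by rewrite h3 andbT within1E h2 orbT.
Qed.

Definition dd n (k : {set 'I_n} -> nat) (x y : carrier k) : nat :=
  if x == y then 0 else if x.1 :&: y.1 == set0 then 1
  else if x.1 :|: y.1 != setT then 2 else 3.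

Lemma card_big n (k : {set 'I_n} -> nat) : 2 <= n -> 3 < #|carrier k|.
Proof.
move=> hn; rewrite /carrier card_prod card_ord.
have -> : #|{set 'I_n}| = 2 ^ n.
  by rewrite -cardsT -powersetT card_powerset cardsT card_ord.
apply: (@leq_trans (2 ^ n)); last by rewrite leq_pmulr.
by rewrite (@leq_trans (2 ^ 2)) // leq_pexp2l.
Qed.

Lemma distE n (k : {set 'I_n} -> nat) (hk : HK k) (hn : 2 <= n) (x y : carrier k) :
  x \in ZV k -> y \in ZV k -> dist (@zadj n k) x y = dd x y.
Proof.
move=> xZ yZ; rewrite /dist.
have h4 := card_big k hn.
have -> : iota 0 #|carrier k| = [:: 0; 1; 2; 3] ++ iota 4 (#|carrier k| - 4).
  by rewrite -[[:: 0; 1; 2; 3]]/(iota 0 4) -iotaD subnKC.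
rewrite find_cat; cbn [has find].
rewrite within3 // !orbT within2E // within1E zadjE // xZ yZ /=.
rewrite /dd; case: eqVneq => //= ne.
by case: (x.1 :&: y.1 == set0) => //=; case: (x.1 :|: y.1 != setT).
Qed.

Definition CC n (k : {set 'I_n} -> nat) (x y : carrier k) : bool :=
  (x.1 == y.1) || [&& x.1 :&: y.1 != set0, ~~ (x.1 \subset y.1) & ~~ (y.1 \subset x.1)].

Lemma CC_sym n (k : {set 'I_n} -> nat) (x y : carrier k) : CC x y = CC y x.
Proof. by rewrite /CC eq_sym setIC; congr orb; congr andb; rewrite andbC. Qed.

Lemma dd_le3 n (k : {set 'I_n} -> nat) (x y : carrier k) : dd x y <= 3.
Proof. by rewrite /dd; case: ifP => // _; case: ifP => // _; case: ifP. Qed.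

Lemma ZVP n (k : {set 'I_n} -> nat) (hk : HK k) (x : carrier k) :
  x \in ZV k -> [/\ x \in LB k, x.1 != set0 & x.1 != setT].
Proof. by rewrite inZV // => /and3P. Qed.

Lemma md_true n (k : {set 'I_n} -> nat) (hk : HK k) (hn : 2 <= n) (x y : carrier k) :
  x \in ZV k -> y \in ZV k -> x != y -> CC x y -> maxdist (@zadj n k) x y.
Proof.
move=> xZ yZ ne hC.
have [xl x0 xT] := ZVP hk xZ.
apply/forallP => w; apply/implyP => hw.
move: (hw); rewrite zadjE // => /and3P [_ wZ /eqP hxw].
rewrite !distE //.
case/orP: hC => [/eqP e | /and3P [hi s1 s2]].
  have -> : dd x y = 2 by rewrite /dd (negbTE ne) -e setIid setUid (negbTE x0) xT.
  have hyw : y.1 :&: w.1 == set0 by rewrite -e hxw.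
  by rewrite /dd hyw; case: (y == w).
case hu: (x.1 :|: y.1 != setT); last first.
  have -> : dd x y = 3 by rewrite /dd (negbTE ne) (negbTE hi) hu.
  exact: dd_le3.
have -> : dd x y = 2 by rewrite /dd (negbTE ne) (negbTE hi) hu.
have hyw : y.1 :|: w.1 != setT.
  apply: contra s1 => /eqP hT; apply/subsetP => i ix.
  have : i \in y.1 :|: w.1 by rewrite hT inE.
  rewrite inE => /orP [// | iw].
  by move/setP: hxw => /(_ i); rewrite !inE ix iw.
by rewrite /dd hyw; case: (y == w) => //; case: (_ == set0).
Qed.

Lemma other n (k : {set 'I_n} -> nat) (hk : HK k)
  (hq : forall i : 'I_n, 2 <= #|cls (atomB k i)|) (v : carrier k) :
  v \in ZV k -> exists2 w, w \in ZV k & (w != v) && (w.1 \subset v.1).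
Proof.
move=> vZ; have [vl v0 vT] := ZVP hk vZ.
case/set0Pn: (v0) => i iv.
case: (v.1 =P [set i]) => e.
  have : ~~ (cls (atomB k i) \subset [set v]).
    apply/negP => /subset_leq_card; rewrite cards1 => h.
    by have := leq_trans (hq i) h.
  case/subsetPn => w; rewrite clsE // inE => /andP [wl /eqP /= we]; rewrite inE => wv.
  exists w; last by rewrite wv we e subxx.
  by rewrite inZV // wl we -e v0 vT.
exists (mk k [set i]).
  apply: (mkZV hk).
    by apply/set0Pn; exists i; rewrite inE.
  by apply: contra vT => /eqP h; rewrite eqEsubset subsetT -h sub1set iv.
apply/andP; split; last by rewrite /= sub1set.
by apply/eqP => h; apply: e; rewrite -h.
Qed.

Lemma md_disj n (k : {set 'I_n} -> nat) (hk : HK k) (hn : 2 <= n)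
  (hq : forall i : 'I_n, 2 <= #|cls (atomB k i)|) (x y : carrier k) :
  x \in ZV k -> y \in ZV k -> x != y -> x.1 :&: y.1 == set0 ->
  ~~ maxdist (@zadj n k) x y.
Proof.
move=> xZ yZ ne hxy.
have [w wZ /andP [wy sw]] := other hk hq yZ.
have [wl w0 wT] := ZVP hk wZ.
apply/forallP => /(_ w) /implyP.
have hxw : zadj x w.
  by rewrite zadjE // xZ wZ /= -subset0 -(eqP hxy) setIS.
move/(_ hxw); rewrite !distE //.
have hyw : y.1 :&: w.1 != set0.
  by apply: contra w0 => /eqP h; rewrite -subset0 -h subsetI sw subxx.
by rewrite /dd (negbTE ne) hxy eq_sym (negbTE wy) (negbTE hyw); case: ifP.
Qed.

Lemma md_prop n (k : {set 'I_n} -> nat) (hk : HK k) (hn : 2 <= n) (x y : carrier k) :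
  x \in ZV k -> y \in ZV k -> x.1 \proper y.1 ->
  ~~ maxdist (@zadj n k) x y.
Proof.
move=> xZ yZ hp.
have [xl x0 xT] := ZVP hk xZ.
have [yl y0 yT] := ZVP hk yZ.
have wZ : mk k (~: x.1) \in ZV k by apply: (mkZV hk); [exact: setC_neq0 | exact: setC_neqT].
move: (hp); rewrite properEneq => /andP [nxy sxy].
case/properP: (hp) => _ [j jy jx].
apply/forallP => /(_ (mk k (~: x.1))) /implyP.
have hxw : zadj x (mk k (~: x.1)) by rewrite zadjE // xZ wZ /= setICr eqxx.
move/(_ hxw); rewrite !distE //.
have ne : x != y by apply: contra nxy => /eqP ->.
have hi : x.1 :&: y.1 != set0 by rewrite (setIidPl sxy).
have hu : x.1 :|: y.1 != setT by rewrite (setUidPr sxy).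
have hi2 : y.1 :&: ~: x.1 != set0 by apply/set0Pn; exists j; rewrite !inE jy jx.
have hu2 : y.1 :|: ~: x.1 == setT.
  apply/eqP/setP => i; rewrite !inE; case ix: (i \in x.1) => /=; last by rewrite orbT.
  by rewrite (subsetP sxy i ix).
have ne2 : (y == mk k (~: x.1)) = false.
  by apply/negbTE/eqP => h; move: hu2; rewrite h /= setUid (negbTE (setC_neqT x0)).
by rewrite /dd (negbTE ne) (negbTE hi) hu ne2 (negbTE hi2) /= hu2.
Qed.

Lemma mmdE n (k : {set 'I_n} -> nat) (hk : HK k) (hn : 2 <= n)
  (hq : forall i : 'I_n, 2 <= #|cls (atomB k i)|) (x y : carrier k) :
  x \in ZV k -> y \in ZV k -> x != y -> mmd (@zadj n k) x y = CC x y.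
Proof.
move=> xZ yZ ne; rewrite /mmd.
case hC: (CC x y).
  by rewrite !md_true // 1?eq_sym // CC_sym.
have [xl x0 xT] := ZVP hk xZ.
move: hC; rewrite /CC => /norP [nxy].
case: (x.1 :&: y.1 =P set0) => hi /=.
  have hi' : x.1 :&: y.1 == set0 by apply/eqP.
  by move=> _; rewrite (negbTE (md_disj hk hn hq xZ yZ ne hi')).
case s1: (x.1 \subset y.1) => /=.
  have hp : x.1 \proper y.1 by rewrite properEneq nxy s1.
  by move=> _; rewrite (negbTE (md_prop hk hn xZ yZ hp)).
rewrite negbK => s2.
have hp : y.1 \proper x.1 by rewrite properEneq eq_sym nxy s2.
by rewrite (negbTE (md_prop hk hn yZ xZ hp)) andbF.
Qed.

Lemma partner n (k : {set 'I_n} -> nat) (hk : HK k)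
  (hq : forall i : 'I_n, 2 <= #|cls (atomB k i)|) (u : carrier k) :
  u \in ZV k -> exists2 v, v \in ZV k & (u != v) && CC u v.
Proof.
move=> uZ; have [ul u0 uT] := ZVP hk uZ.
case/set0Pn: (u0) => i iu.
case: (u.1 =P [set i]) => e.
  have [w wZ /andP [wu sw]] := other hk hq uZ.
  have [wl w0 wT] := ZVP hk wZ.
  exists w => //; rewrite eq_sym wu /CC.
  move: sw; rewrite e subset1 => /orP [/eqP -> | /eqP w00]; first by rewrite eqxx.
  by rewrite w00 eqxx in w0.
have hp : [set i] \proper u.1.
  by rewrite properEneq sub1set iu andbT eq_sym; apply/eqP.
case/properP: hp => _ [i' iu' ii'].
case/set0Pn: (setC_neq0 uT) => j; rewrite inE => ju.
have ni' : i' \notin i |: ~: u.1 by rewrite inE in ii'; rewrite !inE negb_or ii' negbK iu'.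
have wZ : mk k (i |: ~: u.1) \in ZV k.
  apply: (mkZV hk).
    by apply/set0Pn; exists i; rewrite !inE eqxx.
  by apply: contra ni' => /eqP ->; rewrite inE.
exists (mk k (i |: ~: u.1)) => //.
apply/andP; split.
  apply/eqP => h; have h1 : u.1 = i |: ~: u.1 by rewrite {1}h. by move: ni'; rewrite -h1 iu'.
rewrite /CC /=; apply/orP; right; apply/and3P; split.
- by apply/set0Pn; exists i; rewrite !inE iu eqxx.
- by apply/subsetPn; exists i'.
- apply/subsetPn; exists j => //; rewrite !inE ju orbT //.
Qed.

Theorem mainTheorem8 (n : nat) (k : {set 'I_n} -> nat)
  (hn : 3 <= n)
  (hk : forall a : {set 'I_n}, a != set0 -> a != setT -> 0 < k a)
  (hq : forall i : 'I_n, 2 <= #|cls (atomB k i)|) :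
  boundary (@zadj n k) (ZV k) = ZV k /\
  (forall x y : carrier k, ssadj x y = sr_adj (@zadj n k) (ZV k) x y).
Proof.
have hk' : HK k := hk.
have hn2 : 2 <= n by apply: ltnW.
have bnd : boundary (@zadj n k) (ZV k) = ZV k.
  apply/setP => u; rewrite inE; case uZ: (u \in ZV k) => //=.
  apply/exists_inP; have [v vZ /andP [uv hC]] := partner hk' hq uZ.
  by exists v => //; rewrite mmdE.
split => // x y.
rewrite /sr_adj bnd /ssadj.
case xZ: (x \in ZV k) => //=; case yZ: (y \in ZV k) => //=.
have [e | ne] := eqVneq x y => //=.
have [xl _ _] := ZVP hk' xZ; have [yl _ _] := ZVP hk' yZ.
by rewrite mmdE // /CC cls_eq ?cmeet_nzE ?cleE.
Qed.
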